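(* Consider a slotted system with diversity. There are $N$ users, $N_{sub}\ge2$ sub-carriers and slots $1,\dots,T$. In every slot, independently, the BS chooses a user uniformly at random among the $N$ users and a sub-carrier uniformly at random among the $N_{sub}$ sub-carriers, and sends an update to the chosen user on the chosen sub-carrier. The adversary uses a blocking matrix $\sigma\in\{0,1\}^{N_{sub}\times T}$, where $\sigma_j(t)=0$ means sub-carrier $j$ is blocked in slot $t$. Feasibility means $\sum_{j,t}(1-\sigma_j(t))\le\alpha T$ and at most one sub-carrier is blocked per slot, where $0<\alpha<1$ and $\alpha T\in\mathbb Z$. Ages satisfy $a_i(1)=1$. Also $a_i(t+1)=1$ if user $i$ is chosen in slot $t$ and the chosen sub-carrier is not blocked in slot $t$, and $a_i(t+1)=a_i(t)+1$ otherwise. The average age is $\Delta^{\sigma}=\frac1T\sum_{t=1}^T\frac1N\sum_i\mathbb E[a_i(t)]$. Then there exists a maximizer of $\Delta^\sigma$ over feasible $\sigma$ that blocks a single sub-carrier in exactly $\alpha T$ consecutive slots and blocks nothing else. *)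

(* Defs.v *)
From HB Require Import structures.
From mathcomp Require Import all_boot all_order all_algebra.
Set Implicit Arguments. Unset Strict Implicit. Unset Printing Implicit Defensive.
Import Order.TTheory GRing.Theory Num.Theory.
Local Open Scope ring_scope.

(* Slots are 0-based: slot t (paper) is index t-1 : 'I_T.
   A blocking matrix sigma : 'M[bool]_(Nsub, T); sigma j t = false means
   sub-carrier j is blocked in slot t (paper's sigma_j(t) = 0). *)

Definition outcome (N Nsub T : nat) := {ffun 'I_T -> 'I_N * 'I_Nsub}.

(* age N Nsub T sigma w i k = a_i(k+1) on outcome w. *)
Fixpoint age (N Nsub T : nat) (sigma : 'M[bool]_(Nsub, T))
  (w : outcome N Nsub T) (i : 'I_N) (k : nat) : nat :=
  match k with
  | 0 => 1
  | k'.+1 =>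
      match insub k' : option 'I_T with
      | Some t => if ((w t).1 == i) && sigma (w t).2 t then 1
                  else (age sigma w i k').+1
      | None => (age sigma w i k').+1
      end
  end.

(* Expectation under the uniform (independent uniform user and uniform
   sub-carrier in each slot) distribution on outcomes. *)
Definition expect (R : realFieldType) (N Nsub T : nat)
  (X : outcome N Nsub T -> R) : R :=
  (\sum_(w : outcome N Nsub T) X w) / (#|{: outcome N Nsub T}|)%:R.

Arguments expect : clear implicits.
Arguments expect R {N Nsub T}.
Definition avg_age (R : realFieldType) (N Nsub T : nat)
  (sigma : 'M[bool]_(Nsub, T)) : R :=
  T%:R^-1 * \sum_(t < T) (N%:R^-1 *
     \sum_(i < N) expect R (fun w => (age sigma w i t)%:R)).

Definition nblocked (Nsub T : nat) (sigma : 'M[bool]_(Nsub, T)) : nat :=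
  #|[set jt : 'I_Nsub * 'I_T | ~~ sigma jt.1 jt.2]|.

Definition feasible (R : realFieldType) (Nsub T : nat) (alpha : R)
  (sigma : 'M[bool]_(Nsub, T)) : Prop :=
  (nblocked sigma)%:R <= alpha * T%:R /\
  forall t : 'I_T, (#|[set j : 'I_Nsub | ~~ sigma j t]| <= 1)%N.

Definition consecutive_block (Nsub T : nat) (sigma : 'M[bool]_(Nsub, T))
  (K : nat) : Prop :=
  exists (j : 'I_Nsub) (t0 : nat), (t0 + K <= T)%N /\
    forall (j' : 'I_Nsub) (t : 'I_T),
      sigma j' t = ~~ ((j' == j) && (t0 <= t < t0 + K)%N).
Arguments avg_age R N {Nsub T}.

(* Main.v *)
Require Import Defs.
From HB Require Import structures.
From mathcomp Require Import all_boot all_order all_algebra.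
From mathcomp Require Import ring lra zify.
Set Implicit Arguments. Unset Strict Implicit. Unset Printing Implicit Defensive.
Import Order.TTheory GRing.Theory Num.Theory.
Local Open Scope ring_scope.

Definition Fn (R : realFieldType) (n : nat) (d : nat -> R) : R :=
  \sum_(k < n.+1) \sum_(l < k) \prod_(l <= s < k) d s.

Lemma Fn_pair (R : realFieldType) n (d : nat -> R) :
  Fn n d = \sum_(p : 'I_n.+1 * 'I_n.+1)
             (if (p.1 < p.2)%N then \prod_(p.1 <= s < p.2) d s else 0).
Proof.
transitivity (\sum_(l : 'I_n.+1) \sum_(k : 'I_n.+1)
   (if (l < k)%N then \prod_(l <= s < k) d s else 0)); last by rewrite pair_bigA.
rewrite /Fn exchange_big.
apply: eq_bigr => k _.
rewrite (big_ord_widen n.+1 (fun l => \prod_(l <= s < k) d s) (ltnW (ltn_ord k))).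
by rewrite big_mkcond.
Qed.

Lemma Fn_eq (R : realFieldType) n (d d' : nat -> R) :
  (forall s, (s < n)%N -> d s = d' s) -> Fn n d = Fn n d'.
Proof.
move=> h; apply: eq_bigr => k _; apply: eq_bigr => l _.
apply: eq_big_nat => s /andP[_ hs]; apply: h.
have := ltn_ord k; lia.
Qed.

Lemma Fn_mono (R : realFieldType) n (d d' : nat -> R) :
  (forall s, 0 <= d s <= d' s) -> Fn n d <= Fn n d'.
Proof.
move=> h; apply: ler_sum => k _; apply: ler_sum => l _.
by apply: ler_prod => s _; apply: h.
Qed.

Lemma sum_invol (R : realFieldType) (T : finType) (phi : T -> T) (f : T -> R) :
  involutive phi -> (forall p, 0 <= f p + f (phi p)) -> 0 <= \sum_p f p.
Proof.
move=> hi hp.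
have e : \sum_p f p = \sum_p f (phi p) by apply: (reindex_inj (inv_inj hi)).
have : 0 <= \sum_p (f p + f (phi p)) by apply: sumr_ge0 => p _; apply: hp.
rewrite big_split /= -e; lra.
Qed.

Lemma prod_refl (R : realFieldType) (F : nat -> R) c l k :
  (l <= k)%N -> (k <= c)%N ->
  \prod_(c - k <= j < c - l) F j = \prod_(l <= i < k) F (c.-1 - i)%N.
Proof.
elim: k => [|k IH] hlk hkc.
  by rewrite !big_geq //; lia.
case: (ltnP k l) => hkl.
  by rewrite !big_geq //; lia.
rewrite big_nat_recr //= -IH //; last by lia.
rewrite big_ltn; last by lia.
have -> : (c - k.+1).+1 = (c - k)%N by lia.
have -> : (c.-1 - k = c - k.+1)%N by lia.
by rewrite mulrC.
Qed.

Lemma prod_ind (R : realFieldType) (v : R) a l k :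
  \prod_(l <= s < k) (if s == a then v else 1) = if (l <= a < k)%N then v else 1.
Proof. by rewrite -big_mkcond big_nat1_eq. Qed.

Definition hh (R : realFieldType) (d : nat -> R) (a b : nat) (s : nat) : R :=
  if (s == a) || (s == b) then 1 else d s.

Lemma prod_dec (R : realFieldType) (d : nat -> R) a b l k : a != b ->
  \prod_(l <= s < k) d s = \prod_(l <= s < k) hh d a b s *
    (if (l <= a < k)%N then d a else 1) * (if (l <= b < k)%N then d b else 1).
Proof.
move=> hab; rewrite -!prod_ind -!big_split /=.
apply: eq_bigr => s _; rewrite /hh.
case: (eqVneq s a) => [->|hsa]; first by rewrite (negbTE hab) /= mul1r mulr1.
case: (eqVneq s b) => [->|hsb] /=; first by rewrite !mul1r.
by rewrite !mulr1.
Qed.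

Definition cond (a b l k : nat) : bool :=
  (((l <= a) && (a < k) && (k <= b)) || ((a < l) && (l <= b) && (b < k) && (k <= a + b + 1)))%N.

Lemma shift_le (R : realFieldType) n a b (x y : R) (d d' : nat -> R) :
  (a < b)%N -> (a + b + 1 <= n)%N -> x <= y -> (forall s, 0 <= d s) ->
  d a = y -> d b = x -> d' a = x -> d' b = y ->
  (forall s, s != a -> s != b -> d' s = d s) ->
  (forall s, (s < b)%N -> s != a -> d s <= d (a + b - s)%N) ->
  Fn n d <= Fn n d'.
Proof.
move=> hab hn hxy d0 hda hdb hd'a hd'b hdd hrefl.
have hne : a != b by rewrite neq_ltn hab.
have hh' : forall s, hh d' a b s = hh d a b s.
  move=> s; rewrite /hh; case: (eqVneq s a) => //= hsa.
  by case: (eqVneq s b) => //= hsb; rewrite hdd.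
pose Q l k := \prod_(l <= s < k) hh d a b s.
have Q0 : forall l k, 0 <= Q l k.
  move=> l k; apply: prodr_ge0 => s _; rewrite /hh; case: ifP => _ //.
have fform : forall l k, \prod_(l <= s < k) d' s - \prod_(l <= s < k) d s =
   Q l k * ((if (l <= a < k)%N then x else 1) * (if (l <= b < k)%N then y else 1)
          - (if (l <= a < k)%N then y else 1) * (if (l <= b < k)%N then x else 1)).
  move=> l k; rewrite (prod_dec d' _ _ hne) (prod_dec d _ _ hne).
  rewrite (eq_bigr _ (fun s _ => hh' s)) hda hdb hd'a hd'b -/(Q l k).
  by rewrite mulrBr !mulrA.
have hQ : forall l k, (l <= a)%N -> (a < k)%N -> (k <= b)%N ->
    Q l k <= Q (a + b + 1 - k)%N (a + b + 1 - l)%N.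
  move=> l k h1 h2 h3; rewrite /Q prod_refl; try lia.
  rewrite big_nat_cond [X in _ <= X]big_nat_cond.
  apply: ler_prod => i /andP[/andP[hli hik] _].
  have -> : ((a + b + 1).-1 - i = a + b - i)%N by lia.
  rewrite /hh; case: (eqVneq i a) => [->|hia].
    rewrite /= (_ : (a + b - a)%N = b); last by lia.
    by rewrite eqxx orbT lexx ler01.
  have hib : i != b by rewrite neq_ltn; apply/orP; left; lia.
  rewrite (negbTE hib) /=.
  have -> : ((a + b - i)%N == a) = false by apply/negbTE; rewrite neq_ltn; apply/orP; lia.
  have -> : ((a + b - i)%N == b) = false by apply/negbTE; rewrite neq_ltn; apply/orP; lia.
  rewrite /= d0 /=; apply: hrefl => //; lia.
set c := (a + b + 1)%N.
pose phi (p : 'I_n.+1 * 'I_n.+1) : 'I_n.+1 * 'I_n.+1 :=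
  if cond a b p.1 p.2 then (inord (c - p.2), inord (c - p.1)) else p.
have hphi : involutive phi.
  move=> [l k]; rewrite /phi /=.
  case hc: (cond a b l k) => /=; last by rewrite hc.
  have [hlc hkc] : (l <= c /\ k <= c)%N by move: hc; rewrite /cond /c; lia.
  rewrite !inordK; try lia.
  have -> : cond a b (c - k) (c - l) by move: hc; rewrite /cond /c; lia.
  by congr pair; apply: val_inj; rewrite /= inordK; lia.
rewrite -subr_ge0 !Fn_pair -sumrB.
pose f (p : 'I_n.+1 * 'I_n.+1) :=
  (if (p.1 < p.2)%N then \prod_(p.1 <= s < p.2) d' s else 0) -
  (if (p.1 < p.2)%N then \prod_(p.1 <= s < p.2) d s else 0).
rewrite -/(\sum_p f p).
apply: (sum_invol hphi) => -[l k].
rewrite /f /phi /=.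
case hc: (cond a b l k) => /=.
  have [hlc hkc] : (l <= c /\ k <= c)%N by move: hc; rewrite /cond /c; lia.
  rewrite !inordK; try lia.
  have hlk : (l < k)%N by move: hc; rewrite /cond; lia.
  have hlk' : (c - k < c - l)%N by lia.
  rewrite hlk hlk' !fform.
  case/orP: hc => hc.
    have -> : (l <= a < k)%N by lia.
    have -> : (l <= b < k)%N = false by lia.
    have -> : (c - k <= a < c - l)%N = false by rewrite /c; lia.
    have -> : (c - k <= b < c - l)%N by rewrite /c; lia.
    have := hQ l k ltac:(lia) ltac:(lia) ltac:(lia); rewrite -/c => hq.
    rewrite !mulr1 !mul1r; nra.
  have -> : (l <= a < k)%N = false by lia.
  have -> : (l <= b < k)%N by lia.
  have -> : (c - k <= a < c - l)%N by rewrite /c; lia.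
  have -> : (c - k <= b < c - l)%N = false by rewrite /c; lia.
  have := hQ (c - k)%N (c - l)%N ltac:(rewrite /c; lia) ltac:(rewrite /c; lia) ltac:(rewrite /c; lia).
  rewrite -/c (_ : (c - (c - l) = l)%N); last by lia.
  rewrite (_ : (c - (c - k) = k)%N); last by lia.
  move=> hq; rewrite !mulr1 !mul1r; nra.
case: ifP => hlk; last by rewrite subrr addr0.
rewrite fform.
have ge : 0 <= Q l k * ((if (l <= a < k)%N then x else 1) * (if (l <= b < k)%N then y else 1)
          - (if (l <= a < k)%N then y else 1) * (if (l <= b < k)%N then x else 1)).
  apply: mulr_ge0 => //.
  case: ifP => ha; case: ifP => hb; rewrite ?mulr1 ?mul1r; try lra.
  move: hc; rewrite /cond; lia.
lra.
Qed.

Lemma Fn_refl (R : realFieldType) n (d : nat -> R) :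
  Fn n d = Fn n (fun s => d (n.-1 - s)%N).
Proof.
rewrite !Fn_pair.
pose psi (p : 'I_n.+1 * 'I_n.+1) : 'I_n.+1 * 'I_n.+1 :=
  (inord (n - p.2), inord (n - p.1)).
have hpsi : involutive psi.
  move=> [l k]; rewrite /psi /=.
  have := ltn_ord l; have := ltn_ord k => hk hl.
  by congr pair; apply: val_inj; rewrite /= !inordK; lia.
rewrite [RHS](reindex_inj (inv_inj hpsi)).
apply: eq_bigr => -[l k] _; rewrite /psi /=.
have := ltn_ord l; have := ltn_ord k => hk hl.
rewrite !inordK; try lia.
have -> : (n - k < n - l)%N = (l < k)%N by lia.
case: ifP => // hlk.
rewrite prod_refl; try lia.
apply: eq_big_nat => i hi; congr d; lia.
Qed.

Definition dB (R : realFieldType) (x dl : R) (B : nat -> bool) (s : nat) : R :=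
  x + dl * (B s)%:R.
Definition wsum (n : nat) (B : nat -> bool) (g : nat -> nat) : nat :=
  (\sum_(s < n) B s * g s)%N.
Definition swapB (B : nat -> bool) (a b : nat) (s : nat) : bool :=
  if s == a then false else if s == b then true else B s.
Definition reflB (n : nat) (B : nat -> bool) (s : nat) : bool :=
  (s < n)%N && B (n.-1 - s)%N.
Definition wt (n s : nat) : nat := ((2 * s + 1 - n) + (n - (2 * s + 1)))%N.

Lemma sum1 n a (g : nat -> nat) : (a < n)%N ->
  (\sum_(s < n) (s == a :> nat) * g s)%N = g a.
Proof.
move=> ha.
rewrite (eq_bigr (fun s : 'I_n => if s == a :> nat then g s else 0%N)); last first.
  by move=> s _; case: eqP => _; rewrite ?mul1n ?mul0n.
by rewrite -big_mkcond big_ord1_eq ha.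
Qed.

Lemma wsum_swap n (B : nat -> bool) (g : nat -> nat) a b : (a < n)%N -> (b < n)%N -> a != b -> B a -> ~~ B b ->
  (wsum n (swapB B a b) g + g a = wsum n B g + g b)%N.
Proof.
move=> ha hb hab hBa hBb.
rewrite -{1}(sum1 g ha) -(sum1 g hb) /wsum -!big_split /=.
apply: eq_bigr => s _; rewrite /swapB.
case: (eqVneq (s : nat) a) => [->|hsa].
  by rewrite hBa (negbTE hab) /=; lia.
case: (eqVneq (s : nat) b) => [->|hsb].
  by rewrite (negbTE hBb) /=; lia.
by rewrite /=; lia.
Qed.

Lemma wsum_refl n (B : nat -> bool) (g : nat -> nat) : (forall s, (s < n)%N -> g (n.-1 - s)%N = g s) ->
  wsum n (reflB n B) g = wsum n B g.
Proof.
move=> hg; rewrite /wsum (reindex_inj rev_ord_inj) /=.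
apply: eq_bigr => s _; rewrite /reflB /=.
have := ltn_ord s => hs.
have -> : (n - s.+1 < n)%N by lia.
have -> : (n.-1 - (n - s.+1) = s)%N by lia.
by rewrite (_ : (n - s.+1 = n.-1 - s)%N) ?hg //; lia.
Qed.

Lemma leftrun n (B : nat -> bool) : (forall s, B s -> (s < n)%N) -> (exists s, B s) ->
  exists a b, [/\ (a < b)%N, (b <= n)%N, (forall s, (s < a)%N -> ~~ B s),
     (forall s, (a <= s < b)%N -> B s) & ~~ B b].
Proof.
move=> hsup hex.
case: (ex_minnP hex) => a Ba amin.
have hex2 : exists s, (a <= s)%N && ~~ B s.
  exists n; apply/andP; split; first by have := hsup _ Ba; lia.
  by apply/negP => /hsup; rewrite ltnn.
case: (ex_minnP hex2) => b /andP[hab nBb] bmin.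
exists a, b; split => //.
- rewrite ltn_neqAle hab andbT; apply/eqP => e; by rewrite -e Ba in nBb.
- apply: bmin; apply/andP; split; first by have := hsup _ Ba; lia.
  by apply/negP => /hsup; rewrite ltnn.
- by move=> s hs; apply/negP => /amin; lia.
- move=> s /andP[h1 h2]; apply/negPn/negP => hn.
  have := bmin s; rewrite h1 hn => /(_ isT); lia.
Qed.

Lemma cnt_interval n a b : (a <= b)%N -> (b <= n)%N ->
  wsum n (fun s => (a <= s < b)%N) (fun _ => 1%N) = (b - a)%N.
Proof.
move=> hab hbn.
have gen : forall m, wsum m (fun s => (a <= s < b)%N) (fun _ => 1%N) = (minn b m - minn a m)%N.
  elim=> [|m IH]; first by rewrite /wsum big_ord0; lia.
  rewrite /wsum big_ord_recr /=; rewrite /wsum in IH; rewrite IH.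
  case: (a <= m < b)%N / andP => [[h1 h2]|h]; first by lia.
  have : ~~ ((a <= m)%N && (m < b)%N) by apply/negP => /andP.
  lia.
rewrite gen; lia.
Qed.

Lemma shift_step (R : realFieldType) n (x dl : R) (B : nat -> bool) a b :
  0 <= x -> 0 <= dl -> (forall s, B s -> (s < n)%N) -> (a < b)%N ->
  (forall s, (s < a)%N -> ~~ B s) -> (forall s, (a <= s < b)%N -> B s) -> ~~ B b ->
  (a + b + 2 <= n)%N ->
  [/\ (forall s, swapB B a b s -> (s < n)%N),
      (wsum n (swapB B a b) (wt n) < wsum n B (wt n))%N,
      wsum n (swapB B a b) (fun _ => 1%N) = wsum n B (fun _ => 1%N) &
      Fn n (dB x dl B) <= Fn n (dB x dl (swapB B a b))].
Proof.
move=> hx hd hsup hab hlt hin nBb hc.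
have Ba : B a by apply: hin; lia.
have hne : a != b by rewrite neq_ltn hab.
have ha : (a < n)%N by lia.
have hb : (b < n)%N by lia.
split.
- move=> s; rewrite /swapB; case: (eqVneq s a) => // _; case: (eqVneq s b) => [-> _|_ /hsup] //.
- have := wsum_swap (wt n) ha hb hne Ba nBb; rewrite /wt; lia.
- have := wsum_swap (fun _ => 1%N) ha hb hne Ba nBb; lia.
apply: (@shift_le R n a b x (x + dl)); try lia.
- by rewrite lerDl.
- by move=> s; rewrite /dB; apply: addr_ge0 => //; apply: mulr_ge0.
- by rewrite /dB Ba mulr1.
- by rewrite /dB (negbTE nBb) mulr0 addr0.
- by rewrite /dB /swapB eqxx mulr0 addr0.
- by rewrite /dB /swapB eq_sym (negbTE hne) eqxx mulr1.
- by move=> s h1 h2; rewrite /dB /swapB (negbTE h1) (negbTE h2).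
move=> s hsb hsa; rewrite /dB.
case: (ltnP s a) => hs.
  by rewrite (negbTE (hlt s hs)) mulr0 addr0 lerDl; apply: mulr_ge0.
have hsa' : (a < s)%N by rewrite ltn_neqAle hs andbT eq_sym.
rewrite hin; last by lia.
by rewrite hin //; lia.
Qed.

Lemma compress (R : realFieldType) n (x dl : R) : 0 <= x -> 0 <= dl ->
  forall m (B : nat -> bool), (wsum n B (wt n) < m)%N -> (forall s, B s -> (s < n)%N) ->
  exists q r, [/\ (q <= r)%N, (r <= n)%N, (r - q <= wsum n B (fun _ => 1%N))%N &
     Fn n (dB x dl B) <= Fn n (dB x dl (fun s => (q <= s < r)%N))].
Proof.
move=> hx hd; elim=> [|m IH] B hmu hsup; first by rewrite ltn0 in hmu.
case: (boolP [exists s : 'I_n, B s]) => hex; last first.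
  exists 0%N, 0%N; split => //.
  rewrite le_eqVlt; apply/orP; left; apply/eqP; apply: Fn_eq => s hs; rewrite /dB.
  move/existsPn: hex => /(_ (Ordinal hs)) /= /negbTE ->.
  by [].
have hex' : exists s, B s by case/existsP: hex => s Bs; exists (val s).
have [a [b [hab hbn hlt hin nBb]]] := leftrun hsup hex'.
case: (leqP (a + b + 2) n) => hc.
  have [hs1 hs2 hs3 hs4] := shift_step hx hd hsup hab hlt hin nBb hc.
  have [q [r [h1 h2 h3 h4]]] := IH _ (leq_trans hs2 (ltnSE hmu)) hs1.
  exists q, r; split => //; first by rewrite -hs3.
  exact: le_trans hs4 h4.
set B' := reflB n B.
have hsup' : forall s, B' s -> (s < n)%N by move=> s /andP[].
have hex2 : exists s, B' s.
  case: hex' => s Bs; exists (n.-1 - s)%N; rewrite /B' /reflB.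
  have := hsup s Bs => hs.
  rewrite (_ : (n.-1 - (n.-1 - s) = s)%N) ?Bs ?andbT; lia.
have eqF : Fn n (dB x dl B) = Fn n (dB x dl B').
  rewrite Fn_refl; apply: Fn_eq => s hs; by rewrite /dB /B' /reflB hs.
have mueq : wsum n B' (wt n) = wsum n B (wt n).
  by apply: wsum_refl => s hs; rewrite /wt; lia.
have cnteq : wsum n B' (fun _ => 1%N) = wsum n B (fun _ => 1%N).
  by apply: wsum_refl.
have [a' [b' [hab' hbn' hlt' hin' nBb']]] := leftrun hsup' hex2.
case: (leqP (a' + b' + 2) n) => hc'.
  have [hs1 hs2 hs3 hs4] := shift_step hx hd hsup' hab' hlt' hin' nBb' hc'.
  have [q [r [h1 h2 h3 h4]]] := IH _ (leq_trans hs2 (ltac:(rewrite mueq; exact: ltnSE hmu))) hs1.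
  exists q, r; split => //; first by rewrite -cnteq -hs3.
  by rewrite eqF; exact: le_trans hs4 h4.
have hBint : forall s, B s = (a <= s < b)%N.
  move=> s; case: (ltnP s a) => hsa.
    by rewrite (negbTE (hlt s hsa)); lia.
  case: (ltnP s b) => hsb.
    by rewrite hin; lia.
  apply/negbTE/negP => Bs.
  have hs : (s < n)%N := hsup s Bs.
  have hsb' : (b < s)%N.
    rewrite ltn_neqAle hsb andbT; apply/eqP => e; by rewrite e Bs in nBb.
  have ha' : (a' <= n.-1 - s)%N.
    case: (leqP a' (n.-1 - s)) => // hl.
    have := hlt' _ hl; rewrite /B' /reflB.
    rewrite (_ : (n.-1 - (n.-1 - s) = s)%N) ?Bs ?andbT; last by lia.
    by rewrite (_ : (n.-1 - s < n)%N) //; lia.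
  have hb' : (b' <= n.-1 - b)%N.
    case: (leqP b' (n.-1 - b)) => // hl.
    have := hin' (n.-1 - b)%N; rewrite /B' /reflB.
    rewrite (_ : (n.-1 - (n.-1 - b) = b)%N); last by lia.
    rewrite (negbTE nBb) andbF => /(_ ltac:(lia)); done.
  lia.
exists a, b; split => //; first by lia.
  have -> : wsum n B (fun _ => 1%N) = wsum n (fun s => (a <= s < b)%N) (fun _ => 1%N).
    by apply: eq_bigr => s _; rewrite hBint.
  by rewrite cnt_interval //; lia.
rewrite le_eqVlt; apply/orP; left; apply/eqP; apply: Fn_eq => s _; by rewrite /dB hBint.
Qed.

Definition nu (R : realFieldType) N Nsub T (sigma : 'M[bool]_(Nsub, T)) (i : 'I_N)
  (t : 'I_T) (a : 'I_N * 'I_Nsub) : R := (~~ ((a.1 == i) && sigma a.2 t))%:R.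
Arguments nu {R N Nsub T}.

Lemma prodS (R : realFieldType) T (G : 'I_T -> R) l k (hk : (k < T)%N) : (l <= k)%N ->
  \prod_(t : 'I_T | (l <= t < k.+1)%N) G t = G (Ordinal hk) * \prod_(t : 'I_T | (l <= t < k)%N) G t.
Proof.
move=> hlk; rewrite (bigD1 (Ordinal hk)) /=; last by lia.
congr (_ * _); apply: eq_bigl => t.
have -> : (t != Ordinal hk) = ((t : nat) != k) by [].
case: (eqVneq (t : nat) k) => [->|h] /=; first by lia.
move/eqP: h => h; rewrite ?andbT; apply/idP/idP; lia.
Qed.

Lemma age_expand (R : realFieldType) N Nsub T (sigma : 'M[bool]_(Nsub, T))
   (w : outcome N Nsub T) (i : 'I_N) k : (k <= T)%N ->
  (age sigma w i k)%:R = 1 + \sum_(l < k) \prod_(t : 'I_T | (l <= t < k)%N) nu sigma i t (w t) :> R.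
Proof.
elim: k => [|k IH] hk; first by rewrite big_ord0 addr0.
have hk' : (k < T)%N by lia.
rewrite big_ord_recr /=.
rewrite (eq_bigr (fun l : 'I_k => nu sigma i (Ordinal hk') (w (Ordinal hk')) *
    \prod_(t : 'I_T | (l <= t < k)%N) nu sigma i t (w t))); last first.
  by move=> l _; rewrite prodS //; have := ltn_ord l; lia.
rewrite (prodS _ hk') // (big_pred0 _ _ _ (P := fun t : 'I_T => (k <= t < k)%N)); last first.
  by move=> t; lia.
rewrite -mulr_sumr -mulrDr [_ + 1]addrC -IH; last by lia.
rewrite /= (insubT (fun x => x < T)%N hk') /nu /=.
case: ifP => _ /=; first by rewrite mul0r addr0.
by rewrite mul1r -natr1 addrC.
Qed.

Lemma card_outcome N Nsub T : #|{: outcome N Nsub T}| = ((N * Nsub) ^ T)%N.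
Proof. by rewrite /outcome card_ffun card_prod !card_ord. Qed.

Lemma expect_prod (R : realFieldType) N Nsub T (P : pred 'I_T)
  (F : 'I_T -> 'I_N * 'I_Nsub -> R) : (0 < N)%N -> (0 < Nsub)%N ->
  expect R (fun w : outcome N Nsub T => \prod_(t | P t) F t (w t)) =
  \prod_(t | P t) ((\sum_a F t a) / (N * Nsub)%:R).
Proof.
move=> hN hS; rewrite /expect card_outcome.
set M : R := (N * Nsub)%:R.
have hM : M != 0 by rewrite pnatr_eq0 -lt0n muln_gt0 hN.
rewrite (eq_bigr (fun w : outcome N Nsub T => \prod_t (if P t then F t (w t) else 1)));
  last by move=> w _; rewrite big_mkcond.
rewrite -(bigA_distr_bigA (fun t a => if P t then F t a else 1)) /=.
rewrite (eq_bigr (fun t => M * (if P t then (\sum_a F t a) / M else 1))); last first.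
  move=> t _; case: (P t); first by rewrite mulrC divfK.
  by rewrite mulr1 sumr_const card_prod !card_ord /M natrM mulr_natr.
rewrite big_split /= prodr_const card_ord natrX -/M [M ^+ T * _]mulrC mulfK ?expf_neq0 //.
by rewrite -big_mkcond.
Qed.

Lemma expectD (R : realFieldType) N Nsub T (f g : outcome N Nsub T -> R) :
  expect R (fun w => f w + g w) = expect R f + expect R g.
Proof. by rewrite /expect big_split mulrDl. Qed.

Lemma expect_sum (R : realFieldType) N Nsub T k (f : 'I_k -> outcome N Nsub T -> R) :
  expect R (fun w => \sum_(l < k) f l w) = \sum_(l < k) expect R (f l).
Proof. by rewrite /expect exchange_big mulr_suml. Qed.

Lemma expect_cst (R : realFieldType) N Nsub T (r : R) : (0 < N)%N -> (0 < Nsub)%N ->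
  expect R (fun _ : outcome N Nsub T => r) = r.
Proof.
move=> hN hS; rewrite /expect sumr_const -[r *+ _]mulr_natr mulfK // pnatr_eq0 card_outcome.
by rewrite expn_eq0 negb_and muln_eq0 negb_or -!lt0n hN hS.
Qed.

Lemma expect_ext (R : realFieldType) N Nsub T (f g : outcome N Nsub T -> R) :
  (forall w, f w = g w) -> expect R f = expect R g.
Proof. by move=> h; rewrite /expect (eq_bigr _ (fun w _ => h w)). Qed.

Definition nbs Nsub T (sigma : 'M[bool]_(Nsub, T)) (t : 'I_T) : nat :=
  (\sum_(j < Nsub) ~~ sigma j t)%N.

Definition Dsl (R : realFieldType) N Nsub T (sigma : 'M[bool]_(Nsub, T)) (t : 'I_T) : R :=
  1 - (Nsub%:R - (nbs sigma t)%:R) / (N * Nsub)%:R.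
Arguments Dsl {R} N {Nsub T}.

Lemma sum_nu (R : realFieldType) N Nsub T (sigma : 'M[bool]_(Nsub, T)) (i : 'I_N) (t : 'I_T) :
  \sum_a nu sigma i t a = (N * Nsub)%:R - (Nsub%:R - (nbs sigma t)%:R) :> R.
Proof.
have hc : \sum_(j < Nsub) (sigma j t)%:R = Nsub%:R - (nbs sigma t)%:R :> R.
  rewrite (eq_bigr (fun j => 1 - (~~ sigma j t)%:R)); last first.
    by move=> j _; case: (sigma j t); rewrite ?subr0 ?subrr.
  by rewrite sumrB sumr_const card_ord /nbs natr_sum.
rewrite /nu -(pair_bigA _ (fun u j => (~~ ((u == i) && sigma j t))%:R : R)) /=.
rewrite (bigD1 i) //= [X in _ + X](eq_bigr (fun u => Nsub%:R)); last first.
  move=> u /negbTE hu; rewrite hu /= sumr_const card_ord //.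
rewrite sumr_const eqxx /= /nbs natr_sum.
rewrite (_ : #|_| = N.-1); last by rewrite cardC1 card_ord.
have hN : N = N.-1.+1 by rewrite prednK //; apply: (leq_ltn_trans (leq0n i)).
rewrite [in RHS]hN mulSn natrD natrM -mulr_natr.
rewrite (eq_bigr (fun j => (~~ sigma j t : nat)%:R)) //.
ring.
Qed.

Lemma avg_formula (R : realFieldType) N Nsub T (sigma : 'M[bool]_(Nsub, T)) :
  (0 < N)%N -> (0 < Nsub)%N ->
  avg_age R N sigma = T%:R^-1 * \sum_(k < T)
     (1 + \sum_(l < k) \prod_(t : 'I_T | (l <= t < k)%N) Dsl N sigma t).
Proof.
move=> hN hS; rewrite /avg_age; congr (_ * _); apply: eq_bigr => k _.
rewrite (eq_bigr (fun i => 1 + \sum_(l < k) \prod_(t : 'I_T | (l <= t < k)%N) Dsl N sigma t)).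
  have hN0 : N%:R != 0 :> R by rewrite pnatr_eq0 -lt0n.
  rewrite sumr_const card_ord; set C := (1 + _); by rewrite -[C *+ N]mulr_natl mulrA mulVf // mul1r.
move=> i _.
rewrite (@expect_ext R N Nsub T _ (fun w => 1 + \sum_(l < k)
   \prod_(t : 'I_T | (l <= t < k)%N) nu sigma i t (w t))); last first.
  by move=> w; apply: age_expand; exact: ltnW (ltn_ord k).
rewrite expectD expect_cst // expect_sum; congr (_ + _); apply: eq_bigr => l _.
rewrite expect_prod //; apply: eq_bigr => t _; rewrite sum_nu /Dsl.
rewrite mulrBl divff // pnatr_eq0 -lt0n muln_gt0 hN //.
Qed.

Definition dnat (R : realFieldType) N Nsub T (sigma : 'M[bool]_(Nsub, T)) (s : nat) : R :=
  if (insub s : option 'I_T) is Some t then Dsl N sigma t else 0.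
Arguments dnat {R} N {Nsub T}.

Definition Bof Nsub T (sigma : 'M[bool]_(Nsub, T)) (s : nat) : bool :=
  if (insub s : option 'I_T) is Some t then (0 < nbs sigma t)%N else false.

Lemma prod_conv (R : realFieldType) N Nsub T (sigma : 'M[bool]_(Nsub, T)) l k : (k <= T)%N ->
  \prod_(t : 'I_T | (l <= t < k)%N) Dsl N sigma t = \prod_(l <= s < k) dnat (R:=R) N sigma s.
Proof.
move=> hk.
rewrite (eq_bigr (fun t : 'I_T => dnat (R:=R) N sigma t)); last by move=> t _; rewrite /dnat valK.
rewrite -(big_mkord (fun s => (l <= s < k)%N) (dnat N sigma)).
rewrite [RHS](big_nat_widenl _ 0) // [RHS](big_nat_widen _ _ T) //.
Qed.

Lemma avg_Fn (R : realFieldType) N Nsub T (sigma : 'M[bool]_(Nsub, T)) :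
  (0 < N)%N -> (0 < Nsub)%N -> (0 < T)%N ->
  avg_age R N sigma = T%:R^-1 * (T%:R + Fn T.-1 (dnat (R:=R) N sigma)).
Proof.
move=> hN hS hT; rewrite avg_formula // big_split sumr_const card_ord /Fn prednK //.
congr (_ * (_ + _)); apply: eq_bigr => k _; apply: eq_bigr => l _.
by apply: prod_conv; exact: ltnW (ltn_ord k).
Qed.

Lemma nbs_card Nsub T (sigma : 'M[bool]_(Nsub, T)) t :
  nbs sigma t = #|[set j | ~~ sigma j t]|.
Proof.
rewrite -sum1dep_card big_mkcond /nbs; apply: eq_bigr => j _; by case: (sigma j t).
Qed.

Lemma nblocked_sum Nsub T (sigma : 'M[bool]_(Nsub, T)) :
  nblocked sigma = (\sum_(t < T) nbs sigma t)%N.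
Proof.
rewrite /nblocked -sum1dep_card big_mkcond /=.
rewrite (eq_bigr (fun jt : 'I_Nsub * 'I_T => (~~ sigma jt.1 jt.2 : nat))); last first.
  by move=> jt _; case: (sigma jt.1 jt.2).
rewrite -(pair_bigA _ (fun j t => (~~ sigma j t : nat))) /= exchange_big /=.
by [].
Qed.

Lemma Dsl_val (R : realFieldType) N Nsub T (sigma : 'M[bool]_(Nsub, T)) t :
  (0 < N)%N -> (0 < Nsub)%N -> (nbs sigma t <= 1)%N ->
  Dsl N sigma t = dB (1 - N%:R^-1) ((N * Nsub)%:R^-1) (fun _ => (0 < nbs sigma t)%N) 0%N :> R.
Proof.
move=> hN hS hnb; rewrite /Dsl /dB.
have -> : (nbs sigma t)%:R = ((0 < nbs sigma t)%N)%:R :> R.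
  by case: (nbs sigma t) hnb => [|[|m]] //.
have hN0 : N%:R != 0 :> R by rewrite pnatr_eq0 -lt0n.
have hS0 : Nsub%:R != 0 :> R by rewrite pnatr_eq0 -lt0n.
rewrite natrM; field; by rewrite hN0 hS0.
Qed.

Lemma argmax_nat (R : realFieldType) (g : nat -> R) m :
  exists t0, (t0 <= m)%N /\ forall t, (t <= m)%N -> g t <= g t0.
Proof.
elim: m => [|m [t0 [h1 h2]]].
  by exists 0%N; split => // t; rewrite leqn0 => /eqP ->.
case: (leP (g m.+1) (g t0)) => h.
  exists t0; split; first by lia.
  move=> t; rewrite leq_eqVlt ltnS => /orP[/eqP ->|/h2] //.
exists m.+1; split => // t; rewrite leq_eqVlt ltnS => /orP[/eqP ->|/h2 ht] //.
exact: le_trans ht (ltW h).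
Qed.

Lemma dB_mono (R : realFieldType) (x dl : R) (B1 B2 : nat -> bool) s :
  0 <= x -> 0 <= dl -> (B1 s -> B2 s) -> 0 <= dB x dl B1 s <= dB x dl B2 s.
Proof.
move=> hx hd h; rewrite /dB; apply/andP; split.
  by apply: addr_ge0 => //; apply: mulr_ge0.
rewrite lerD2l; apply: ler_wpM2l => //; rewrite ler_nat.
by case: (B1 s) h => // ->.
Qed.

Unset Implicit Arguments.
Unset Strict Implicit.

Theorem theorem8 (R : realFieldType) (N Nsub T : nat) (alpha : R) (K : nat)
  (hN : (0 < N)%N) (hNsub : (2 <= Nsub)%N)
  (halpha0 : 0 < alpha) (halpha1 : alpha < 1)
  (hK : alpha * T%:R = K%:R) :
  exists sigma : 'M[bool]_(Nsub, T),
    [/\ feasible alpha sigma,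
        consecutive_block sigma K &
        forall sigma' : 'M[bool]_(Nsub, T),
          feasible alpha sigma' ->
          avg_age R N sigma' <= avg_age R N sigma].
Proof.
have hS : (0 < Nsub)%N by lia.
case: (posnP T) => hT.
  subst T.
  have hK0 : K = 0%N by apply/eqP; rewrite -(eqr_nat R) -hK mulr0.
  subst K.
  exists (const_mx true); split.
  - split; last by move=> [t ht].
    have -> : nblocked (const_mx true : 'M[bool]_(Nsub, 0)) = 0%N.
      by apply/eqP; rewrite -leqn0 (leq_trans (max_card _)) // card_prod !card_ord muln0.
    by rewrite mulr0.
  - by exists (Ordinal hS), 0%N; split => // j' [t ht].
  - by move=> sigma' _; rewrite /avg_age !big_ord0 mulr0.
set n := T.-1.
set x : R := 1 - N%:R^-1.
set dl : R := (N * Nsub)%:R^-1.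
have hx : 0 <= x.
  rewrite /x subr_ge0 invf_le1 ?ltr0n // ler1n //.
have hdl : 0 <= dl by rewrite /dl invr_ge0 ler0n.
have hKT : (K < T)%N.
  rewrite -(ltr_nat R) -hK -[X in _ < X]mul1r ltr_pM2r ?ltr0n //.
have [t0 [ht0 ht0max]] := argmax_nat (fun t => Fn n (dB x dl (fun s => (t <= s < t + K)%N))) (T - K).
pose j0 : 'I_Nsub := Ordinal hS.
pose sigma : 'M[bool]_(Nsub, T) := \matrix_(j, t) ~~ ((j == j0) && (t0 <= t < t0 + K)%N).
have nbsig : forall t, nbs sigma t = (t0 <= t < t0 + K)%N.
  move=> t; rewrite /nbs (bigD1 j0) //= mxE eqxx negbK /= big1 ?addn0 //.
  by move=> j /negbTE hj; rewrite mxE hj.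
exists sigma; split.
- split; last by move=> t; rewrite -nbs_card nbsig; case: (_ && _).
  rewrite nblocked_sum hK ler_nat.
  rewrite (eq_bigr (fun t : 'I_T => (t0 <= t < t0 + K)%N * 1)%N); last first.
    by move=> t _; rewrite nbsig muln1.
  rewrite -/(wsum T (fun s => (t0 <= s < t0 + K)%N) (fun _ => 1%N)) cnt_interval; lia.
- exists j0, t0; split; first by lia.
  by move=> j' t; rewrite mxE.
move=> sigma' [hfb hfs].
have hnb : forall t, (nbs sigma' t <= 1)%N by move=> t; rewrite nbs_card.
rewrite !avg_Fn //.
apply: ler_wpM2l; first by rewrite invr_ge0 ler0n.
rewrite lerD2l.
set B := fun s => (s < n)%N && Bof sigma' s.
have eq1 : Fn n (dnat N sigma') = Fn n (dB x dl B).
  apply: Fn_eq => s hs.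
  have hsT : (s < T)%N by rewrite /n in hs; lia.
  rewrite /dnat (insubT (fun s => s < T)%N hsT) /= (Dsl_val _ hN hS (hnb _)).
  by rewrite /dB /B /Bof hs (insubT (fun s => s < T)%N hsT).
have eq2 : Fn n (dnat N sigma) = Fn n (dB x dl (fun s => (t0 <= s < t0 + K)%N)).
  apply: Fn_eq => s hs.
  have hsT : (s < T)%N by rewrite /n in hs; lia.
  rewrite /dnat (insubT (fun s => s < T)%N hsT) /=.
  have hnb' : (nbs sigma (Sub s hsT) <= 1)%N by rewrite nbsig; case: (_ && _).
  rewrite (Dsl_val _ hN hS hnb') /dB nbsig.
  by case: (t0 <= s < t0 + K)%N.
have [q [r [hqr hrn hcnt hF]]] := compress hx hdl (ltnSn (wsum n B (wt n))) (B := B)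
   ltac:(by move=> s /andP[]).
have hcK : (wsum n B (fun _ => 1%N) <= K)%N.
  apply: (@leq_trans (nblocked sigma')); last by rewrite -(ler_nat R) -hK.
  rewrite nblocked_sum /wsum (big_ord_widen T (fun s => B s * 1)%N); last by rewrite /n; lia.
  rewrite big_mkcond /=; apply: leq_sum => t _.
  rewrite /B /Bof valK; case: ifP => _; last by [].
  case: (t < n)%N; rewrite ?muln1 //=; case: (nbs sigma' t) => //.
set t1 := minn q (T - K).
have h1 : Fn n (dB x dl (fun s => (q <= s < r)%N)) <=
          Fn n (dB x dl (fun s => (t1 <= s < t1 + K)%N)).
  apply: Fn_mono => s; apply: dB_mono => // /andP[h1 h2].
  rewrite /t1 /n in hrn *; lia.
rewrite eq1 eq2; apply: (le_trans hF); apply: (le_trans h1).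
apply: ht0max; rewrite /t1; lia.
Qed.
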